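(* Let $\gamma(s)=(X_1,\dots,X_r,Y_1,\dots,Y_r)(s)$, $s\in\mathbb R$, be a Ricci-flat trajectory (as defined in the context). Fix $s^*\in\mathbb R$ and define $t(s)=\int_{-\infty}^{s}\exp\!\big(\int_{s^*}^{\sigma}\mathcal G\big)\,d\sigma$ and $g_i(s)=\frac{\sqrt{d_i}}{Y_i(s)}\exp\!\big(\int_{s^*}^{s}\mathcal G\big)$. Then $t(s)\to+\infty$ as $s\to+\infty$; consequently the corresponding Ricci-flat metric $dt^2+g_1^2d\theta^2+\sum_{i\ge2}g_i^2h_i$ is complete.
   Context: Fix $r\ge2$, $d_1=1$, $\lambda_1=0$, and integers $d_i\ge2$ and reals $\lambda_i>0$ for $i=2,\dots,r$ (dimensions and Einstein constants of Einstein manifolds $(M_i,h_i)$); $n=\sum_i d_i$. Consider the ODE system, with $'=d/ds$ and $\mathcal G=\sum_{j=1}^rX_j^2$: $X_i'=X_i(\mathcal G-1)+\frac{\lambda_iY_i^2}{\sqrt{d_i}}$, $Y_i'=Y_i\big(\mathcal G-\frac{X_i}{\sqrt{d_i}}\big)$, $i=1,\dots,r$. Let $\mathcal L=\sum_iX_i^2+\sum_i\lambda_iY_i^2-1$, $\mathcal H=\sum_i\sqrt{d_i}X_i$, and $P_0$ the point $X_1=Y_1=1$, $X_i=Y_i=0$ ($i\ge2$). A Ricci-flat trajectory is a non-constant solution defined for all $s\in\mathbb R$ with $\gamma(s)\to P_0$ as $s\to-\infty$, contained in $\{\mathcal L=0,\mathcal H=1\}$, and with $Y_i(s)>0$ for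 all $i$ and $s$. *)

(* Defs.v *)
From Stdlib Require Import Reals List.
From Coquelicot Require Import Coquelicot.
Open Scope R_scope.

(* Indices i = 1..r of the paper are encoded as i = 0..r-1 (nat). *)

Definition sumr (r : nat) (f : nat -> R) : R :=
  fold_right Rplus 0 (map f (seq 0 r)).

Definition admissible_data (r : nat) (d : nat -> nat) (lam : nat -> R) : Prop :=
  (2 <= r)%nat /\ d 0%nat = 1%nat /\ lam 0%nat = 0 /\
  (forall i, (1 <= i < r)%nat -> (2 <= d i)%nat /\ 0 < lam i).

Definition Gfun (r : nat) (X : nat -> R -> R) (s : R) : R :=
  sumr r (fun j => (X j s) ^ 2).

Definition Lfun (r : nat) (lam : nat -> R) (X Y : nat -> R -> R) (s : R) : R :=
  sumr r (fun i => (X i s) ^ 2) + sumr r (fun i => lam i * (Y i s) ^ 2) - 1.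

Definition Hfun (r : nat) (d : nat -> nat) (X : nat -> R -> R) (s : R) : R :=
  sumr r (fun i => sqrt (INR (d i)) * X i s).

Definition solves_ODE (r : nat) (d : nat -> nat) (lam : nat -> R)
  (X Y : nat -> R -> R) : Prop :=
  forall i, (i < r)%nat -> forall s : R,
    is_derive (X i) s (X i s * (Gfun r X s - 1)
                       + lam i * (Y i s) ^ 2 / sqrt (INR (d i))) /\
    is_derive (Y i) s (Y i s * (Gfun r X s - X i s / sqrt (INR (d i)))).

Definition P0coord (i : nat) : R := if Nat.eqb i 0 then 1 else 0.

Definition ricci_flat_trajectory (r : nat) (d : nat -> nat) (lam : nat -> R)
  (X Y : nat -> R -> R) : Prop :=
  solves_ODE r d lam X Y /\
  (exists i s1 s2, (i < r)%nat /\ (X i s1 <> X i s2 \/ Y i s1 <> Y i s2)) /\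
  (forall i, (i < r)%nat ->
     is_lim (X i) m_infty (P0coord i) /\ is_lim (Y i) m_infty (P0coord i)) /\
  (forall s, Lfun r lam X Y s = 0 /\ Hfun r d X s = 1) /\
  (forall i s, (i < r)%nat -> 0 < Y i s).

Definition tintegrand (r : nat) (X : nat -> R -> R) (sstar sigma : R) : R :=
  exp (RInt (Gfun r X) sstar sigma).

Definition tfun (r : nat) (X : nat -> R -> R) (sstar s : R) : R :=
  RInt_gen (tintegrand r X sstar) (Rbar_locally m_infty) (at_point s).

(* Main.v *)
Require Import Defs.
From Stdlib Require Import Reals List Lra Lia Classical.
From Coquelicot Require Import Coquelicot.
Open Scope R_scope.

Lemma fold_nonneg (X : nat -> R -> R) (l : list nat) s :
  0 <= fold_right Rplus 0 (map (fun j => X j s ^ 2) l).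
Proof.
  induction l as [|a l IH]; simpl map; simpl fold_right; [lra|].
  apply Rplus_le_le_0_compat; [|exact IH]. apply pow2_ge_0.
Qed.

Lemma fold_cont (X : nat -> R -> R) (l : list nat) s :
  (forall j, In j l -> continuous (X j) s) ->
  continuous (fun s => fold_right Rplus 0 (map (fun j => X j s ^ 2) l)) s.
Proof.
  induction l as [|a l IH]; intros H; simpl.
  - apply continuous_const.
  - apply (continuous_ext (fun s => plus (mult (X a s) (X a s))
            (fold_right Rplus 0 (map (fun j => X j s ^ 2) l)))).
    { intros x. unfold plus, mult; simpl. ring. }
    apply (@continuous_plus R_UniformSpace R_AbsRing R_NormedModule).
    + apply (@continuous_mult R_UniformSpace R_AbsRing); apply H; left; reflexivity.
    + apply IH. intros j Hj; apply H; right; exact Hj.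
Qed.

Lemma G_nonneg r X s : 0 <= Gfun r X s.
Proof. apply fold_nonneg. Qed.

Lemma G_ge_X0 r X s : (1 <= r)%nat -> X 0%nat s ^ 2 <= Gfun r X s.
Proof.
  intros Hr. destruct r as [|r]; [lia|].
  unfold Gfun, sumr. change (X 0%nat s ^ 2 <= X 0%nat s ^ 2 + fold_right Rplus 0 (map (fun j => X j s ^ 2) (seq 1 r))). pose proof (fold_nonneg X (seq 1 r) s). lra.
Qed.

Theorem lemma4p1 (r : nat) (d : nat -> nat) (lam : nat -> R)
  (X Y : nat -> R -> R) (sstar : R) :
  admissible_data r d lam ->
  ricci_flat_trajectory r d lam X Y ->
  (forall s : R,
     ex_RInt_gen (tintegrand r X sstar) (Rbar_locally m_infty) (at_point s)) /\
  is_lim (fun s => tfun r X sstar s) p_infty p_infty.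
Proof.
  intros [Hr _] [Hode [_ [Hlim [_ _]]]].
  assert (HGc : forall s, continuous (Gfun r X) s).
  { intros s. apply fold_cont. intros j Hj. apply in_seq in Hj.
    destruct (Hode j ltac:(lia) s) as [H _].
    apply (@ex_derive_continuous R_AbsRing R_NormedModule). eexists; exact H. }
  assert (HGe : forall a b, ex_RInt (Gfun r X) a b).
  { intros; apply (@ex_RInt_continuous R_CompleteNormedModule); auto. }
  assert (HId : forall x, is_derive (fun y => RInt (Gfun r X) sstar y) x (Gfun r X x)).
  { intros x. apply is_derive_RInt with sstar; auto.
    apply filter_forall. intros; apply (@RInt_correct R_CompleteNormedModule); auto. }
  assert (Hfd : forall x, is_derive (tintegrand r X sstar) x
                  (Gfun r X x * tintegrand r X sstar x)).
  { intros x. exact (is_derive_comp exp _ x _ _ (is_derive_exp _) (HId x)). }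
  assert (Hfc : forall x, continuous (tintegrand r X sstar) x).
  { intros x. apply (@ex_derive_continuous R_AbsRing R_NormedModule). eexists; apply Hfd. }
  assert (Hfpos : forall x, 0 < tintegrand r X sstar x).
  { intros; apply exp_pos. }
  assert (Hfe : forall a b, ex_RInt (tintegrand r X sstar) a b).
  { intros; apply (@ex_RInt_continuous R_CompleteNormedModule); auto. }
  set (f := tintegrand r X sstar) in *.
  set (F := fun x => RInt f sstar x).
  assert (HFd : forall x, is_derive F x (f x)).
  { intros x. apply is_derive_RInt with sstar; auto.
    apply filter_forall. intros; apply (@RInt_correct R_CompleteNormedModule); auto. }
  assert (HCh : forall x y, F y = F x + RInt f x y).
  { intros x y. unfold F. rewrite <- (RInt_Chasles f sstar x y); auto. }
  assert (Hmono : forall x y, x <= y -> F x <= F y).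
  { intros x y Hxy. rewrite (HCh x y).
    assert (0 <= RInt f x y); [|lra].
    apply RInt_ge_0; auto. intros; apply Rlt_le; auto. }
  assert (Hs0 : exists s0, forall x, x < s0 -> 1/2 <= Gfun r X x).
  { destruct (Hlim 0%nat ltac:(lia)) as [HX0 _].
    assert (HP : Rbar_locally (Finite (P0coord 0)) (fun y => 3/4 < y)).
    { simpl. assert (Hq : 0 < 1/4) by lra. exists (mkposreal _ Hq).
      intros y Hy. unfold ball in Hy; simpl in Hy. unfold AbsRing_ball, abs, minus, plus, opp in Hy.
      simpl in Hy. unfold P0coord in Hy; simpl in Hy.
      apply Rabs_lt_between in Hy. lra. }
    destruct (HX0 _ HP) as [M HM]. exists M. intros x Hx.
    pose proof (HM x Hx) as H. simpl in H.
    pose proof (G_ge_X0 r X x ltac:(lia)). simpl in *. nra. }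
  destruct Hs0 as [s0 Hs0].
  assert (Hbd : forall x, x <= s0 -> RInt f x s0 <= 2 * f s0).
  { intros x Hx.
    assert (H1 : RInt f x s0 <= RInt (fun y => scal 2 (Gfun r X y * f y)) x s0).
    { apply RInt_le; auto.
      - apply (@ex_RInt_continuous R_CompleteNormedModule). intros z _.
        apply (continuous_ext (fun y => mult 2 (mult (Gfun r X y) (f y)))).
        { intros; reflexivity. }
        apply (@continuous_mult R_UniformSpace R_AbsRing); [apply continuous_const|].
        apply (@continuous_mult R_UniformSpace R_AbsRing); auto.
      - intros y Hy. unfold scal; simpl; unfold mult; simpl.
        pose proof (Hs0 y ltac:(lra)). pose proof (Hfpos y). nra. }
    rewrite (@RInt_scal R_CompleteNormedModule (fun y => Gfun r X y * f y)) in H1.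
    2:{ apply (@ex_RInt_continuous R_CompleteNormedModule). intros z _. apply (@continuous_mult R_UniformSpace R_AbsRing); auto. }
    assert (H2 : RInt (fun y => Gfun r X y * f y) x s0 = f s0 - f x).
    { apply is_RInt_unique.
      apply (is_RInt_derive f (fun y => Gfun r X y * f y)).
      - intros; apply Hfd.
      - intros; apply (@continuous_mult R_UniformSpace R_AbsRing); auto. }
    rewrite H2 in H1. unfold scal in H1; simpl in H1; unfold mult in H1; simpl in H1.
    pose proof (Hfpos x). lra. }
  assert (Hlow : forall x, F s0 - 2 * f s0 <= F x).
  { intros x. destruct (Rle_or_lt x s0) as [Hx|Hx].
    - rewrite (HCh x s0). pose proof (Hbd x Hx). lra.
    - pose proof (Hmono s0 x ltac:(lra)). pose proof (Hfpos s0). lra. }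
  destruct (completeness (fun y => exists x, y = - F x)) as [m [Hub Hlub]].
  { exists (- (F s0 - 2 * f s0)). intros y [x ->]. pose proof (Hlow x). lra. }
  { exists (- F 0); exists 0; reflexivity. }
  set (l := - m).
  assert (HFl : is_lim F m_infty l).
  { intros P [eps HP].
    assert (Hex : exists x0, F x0 < l + eps).
    { apply NNPP. intros Hn.
      assert (m <= m - eps); [|destruct eps; simpl in *; lra].
      apply Hlub. intros y [x ->].
      destruct (Rle_or_lt (l + eps) (F x)) as [H|H]; [unfold l in H; lra|].
      exfalso; apply Hn; exists x; exact H. }
    destruct Hex as [x0 Hx0]. exists x0. intros x Hx.
    apply HP. unfold ball; simpl; unfold AbsRing_ball, abs, minus, plus, opp; simpl.
    apply Rabs_lt_between.
    pose proof (Hmono x x0 ltac:(lra)).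
    assert (- F x <= m) by (apply Hub; exists x; reflexivity).
    unfold l in *. lra. }
  assert (Hgen : forall s, is_RInt_gen f (Rbar_locally m_infty) (at_point s) (F s - l)).
  { intros s.
    apply (is_RInt_gen_ext (Derive F)).
    { apply filter_forall. intros; apply is_derive_unique; auto. }
    apply (is_RInt_gen_Derive F l (F s)).
    - apply filter_forall. intros; eexists; apply HFd.
    - apply filter_forall. intros. apply (continuous_ext f).
      { intros; symmetry; apply is_derive_unique; auto. } auto.
    - exact HFl.
    - intros P HP. exact (locally_singleton _ _ HP). }
  split.
  - intros s. eexists. apply Hgen.
  - assert (Ht : forall s, tfun r X sstar s = F s - l).
    { intros s. apply is_RInt_gen_unique. apply Hgen. }
    assert (Hge : forall s, sstar <= s -> s - sstar <= F s).
    { intros s Hs. unfold F.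
      assert (RInt (fun _ => 1) sstar s <= RInt f sstar s).
      { apply RInt_le; auto. apply ex_RInt_const.
        intros y Hy. unfold f, tintegrand.
        assert (0 <= RInt (Gfun r X) sstar y).
        { apply RInt_ge_0; auto. lra. intros; apply G_nonneg. }
        pose proof (exp_ineq1_le (RInt (Gfun r X) sstar y)). lra. }
      rewrite RInt_const in H. unfold scal in H; simpl in H; unfold mult in H; simpl in H. lra. }
    intros P [M HM]. exists (Rmax sstar (M + sstar + l)). intros x Hx.
    apply HM. rewrite Ht.
    pose proof (Rmax_l sstar (M + sstar + l)). pose proof (Rmax_r sstar (M + sstar + l)).
    pose proof (Hge x ltac:(lra)). lra.
Qed.
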